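(* Let $n\ge2$ and let $Q\in\mathcal{Q}_n$ be meet-irreducible in $(\mathcal{Q}_n,\le)$; write $Q=Q(w)$ with $w\in S_n$. Then $Q$ is associative, i.e. $Q(i,Q(j,k))=Q(Q(i,j),k)$ for all $i,j,k\in L_n$, if and only if $w$ is a simple transposition $s_j$ (interchanging $j$ and $j+1$) for some $j\in[n-1]$.
   Context: Fix $n\ge2$, $L_n=\{0,\dots,n\}$. $\mathcal{Q}_n$ is the set of irreducible discrete quasi-copulas: maps $Q:L_n\times L_n\to L_n$ (onto) with $Q(i,0)=Q(0,i)=0$, $Q(i,n)=Q(n,i)=i$, non-decreasing in each argument, and $Q(i,j)+Q(i',j')\ge Q(i,j')+Q(i',j)$ whenever $i\le i'$, $j\le j'$ and one of $i,i',j,j'$ lies in $\{0,n\}$; it is ordered by $P\le Q$ iff $P(i,j)\le Q(i,j)$ for all $i,j$. An element $z$ of a finite poset is meet-irreducible if it is not the maximum and $z=x\wedge y$ implies $z=x$ or $z=y$. It is known that every meet-irreducible element of $\mathcal{Q}_n$ is of the form $Q(w)$, $w\in S_n$, where $Q(w)(r,s)=|\{i\le r: w(i)\le s\}|$ (and $0$ if $r=0$ or $s=0$). *)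

(* Defs.v *)
From mathcomp Require Import all_boot all_order all_fingroup.
Set Implicit Arguments. Unset Strict Implicit. Unset Printing Implicit Defensive.

Definition Ln (n : nat) := 'I_n.+1.

Definition qmap (n : nat) := {ffun Ln n * Ln n -> Ln n}.

Definition qv n (Q : qmap n) (i j : Ln n) : nat := nat_of_ord (Q (i, j)).

Definition is_bd n (i : Ln n) : bool := (i == 0 :> nat) || (i == n :> nat).

(* Q is an (irreducible) discrete quasi-copula, i.e. Q belongs to \mathcal{Q}_n *)
Definition is_dqc n (Q : qmap n) : Prop :=
  [/\ (forall y : Ln n, exists p, Q p = y),
      (forall i : Ln n, qv Q i ord0 = 0 /\ qv Q ord0 i = 0),
      (forall i : Ln n, qv Q i ord_max = i /\ qv Q ord_max i = i),
      (forall i i' j : Ln n, i <= i' -> qv Q i j <= qv Q i' j /\ qv Q j i <= qv Q j i') &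
      (forall i i' j j' : Ln n, i <= i' -> j <= j' ->
         [|| is_bd i, is_bd i', is_bd j | is_bd j'] ->
         qv Q i j' + qv Q i' j <= qv Q i j + qv Q i' j')].

Definition qle n (P Q : qmap n) : Prop := forall i j : Ln n, qv P i j <= qv Q i j.

Definition is_meet n (z x y : qmap n) : Prop :=
  [/\ is_dqc z, qle z x, qle z y &
      forall u, is_dqc u -> qle u x -> qle u y -> qle u z].

Definition is_maximum n (z : qmap n) : Prop :=
  is_dqc z /\ forall x, is_dqc x -> qle x z.

Definition meet_irreducible n (z : qmap n) : Prop :=
  [/\ is_dqc z, ~ is_maximum z &
      forall x y, is_dqc x -> is_dqc y -> is_meet z x y -> z = x \/ z = y].

(* Q(w) for w in S_n; S_n acts on 'I_n, where k : 'I_n stands for k+1 in [n]: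
   Q(w)(r,s) = |{ i <= r : w(i) <= s }| *)
Definition Qw n (w : 'S_n) : qmap n :=
  [ffun p : Ln n * Ln n =>
     inord #|[set k : 'I_n | (k < p.1) && (w k < p.2)]|].

Definition qassoc n (Q : qmap n) : Prop :=
  forall i j k : Ln n, Q (i, Q (j, k)) = Q (Q (i, j), k).

(* w is a simple transposition s_j, j in [n-1], swapping j and j+1; in the 0-based
   encoding this swaps (j-1) and j, i.e. a and a+1 with a.+1 < n *)
Definition is_simple_transposition n (w : 'S_n) : Prop :=
  exists (a : 'I_n) (Ha : a.+1 < n), w = tperm a (Ordinal Ha).

(* Main.v *)
Require Import Defs.
From mathcomp Require Import all_boot all_order all_fingroup.
From mathcomp Require Import zify.
Set Implicit Arguments. Unset Strict Implicit. Unset Printing Implicit Defensive.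

Definition qf m (w : 'S_m.+1) (x y : nat) : nat :=
  \sum_(k < m.+1) ((k < x) && (w k < y)).

Definition fw m (w : 'S_m.+1) (k : nat) : nat := w (inord k).

Lemma card_qf m (w : 'S_m.+1) x y :
  #|[set k : 'I_m.+1 | (k < x) && (w k < y)]| = qf w x y.
Proof.
rewrite -sum1_card big_mkcond; apply: eq_bigr => i _; rewrite inE.
by case: (_ && _).
Qed.

Lemma fwE m (w : 'S_m.+1) (i : 'I_m.+1) : fw w i = w i.
Proof. by rewrite /fw inord_val. Qed.

Lemma fw_lt m (w : 'S_m.+1) k : fw w k < m.+1.
Proof. exact: ltn_ord. Qed.

Lemma fw_inv m (w : 'S_m.+1) k : k < m.+1 -> fw (w^-1)%g (fw w k) = k.
Proof.
move=> Hk; rewrite /fw inord_val permK inordK //.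
Qed.

Lemma fw_invV m (w : 'S_m.+1) k : k < m.+1 -> fw w (fw (w^-1)%g k) = k.
Proof.
move=> Hk; rewrite /fw inord_val permKV inordK //.
Qed.

Lemma fw_inj m (w : 'S_m.+1) x y : x < m.+1 -> y < m.+1 -> fw w x = fw w y -> x = y.
Proof. by move=> Hx Hy E; rewrite -(fw_inv w Hx) -(fw_inv w Hy) E. Qed.

Lemma qfS m (w : 'S_m.+1) x y : x < m.+1 -> qf w x.+1 y = qf w x y + (fw w x < y).
Proof.
move=> Hx; rewrite /qf.
rewrite (eq_bigr (fun k : 'I_m.+1 => ((k < x) && (w k < y)) + ((k == x :> nat) && (w k < y)))); last first.
  move=> k _; rewrite ltnS leq_eqVlt; case: (ltngtP k x) => //= _; by case: (_ < y).
rewrite big_split /=; congr (_ + _).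
rewrite (bigD1 (inord x)) //= inordK // eqxx /= big1 ?addn0 //.
move=> k /eqP Hk; case E: (k == x :> nat) => //=.
by case: Hk; apply: val_inj; rewrite /= inordK // (eqP E).
Qed.

Lemma qf0 m (w : 'S_m.+1) y : qf w 0 y = 0.
Proof. by rewrite /qf big1. Qed.

Lemma qfT m (w : 'S_m.+1) x y : qf w x y = qf (w^-1)%g y x.
Proof.
rewrite /qf (reindex_inj (h := (w^-1)%g) (@perm_inj _ _)) /=.
by apply: eq_bigr => k _; rewrite permKV andbC.
Qed.

Definition gridA N (g : nat -> nat -> nat) : Prop :=
  (forall i, i <= N -> g i 0 = 0 /\ g i N = i) /\
  (forall i j, i < N -> j <= N -> g i j <= g i.+1 j <= (g i j).+1).

Definition gT (g : nat -> nat -> nat) := fun i j => g j i.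

Definition gridok N g := gridA N g /\ gridA N (gT g).

Lemma gridA_ext N g h : (forall i j, g i j = h i j) -> gridA N g -> gridA N h.
Proof.
move=> E [H1 H2]; split=> [i Hi|i j Hi Hj]; rewrite -!E; [exact: H1| exact: H2].
Qed.

Lemma grid_mono1 N g : gridA N g -> forall i i' j, i <= i' -> i' <= N -> j <= N ->
  g i j <= g i' j /\ g i' j <= g i j + (i' - i).
Proof.
move=> [_ H] i i' j Hii' Hi' Hj.
have: forall d, i + d <= N -> g i j <= g (i + d) j /\ g (i + d) j <= g i j + d.
  elim=> [|d IH] Hd; first by rewrite addn0; lia.
  have [h1 h2] : g i j <= g (i + d) j /\ g (i + d) j <= g i j + d by apply: IH; lia.
  have := H (i + d) j ltac:(lia) Hj; rewrite addnS; lia.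
move/(_ (i' - i)); rewrite subnKC //; apply; done.
Qed.

Lemma gridok_T N g : gridok N g -> gridok N (gT g).
Proof. by move=> [H1 H2]; split=> //; apply: gridA_ext H1. Qed.

Lemma grid_facts N g : gridok N g -> forall i j, i <= N -> j <= N ->
  [/\ g i 0 = 0, g 0 j = 0, g i N = i & g N j = j].
Proof.
move=> [[A1 _] [B1 _]] i j Hi Hj.
have [a1 a2] := A1 i Hi; have [b1 b2] := B1 j Hj; done.
Qed.

Lemma rect N g : gridok N g -> forall i i' j j', i <= i' -> i' <= N -> j <= j' -> j' <= N ->
  [|| (i == 0) || (i == N), (i' == 0) || (i' == N), (j == 0) || (j == N) | (j' == 0) || (j' == N)] ->
  g i j' + g i' j <= g i j + g i' j'.
Proof.
move=> Hg i i' j j' Hii Hi' Hjj Hj'.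
have [A B] := Hg; have [A' B'] := gridok_T Hg.
have Hi : i <= N by lia. have Hj : j <= N by lia.
have [m1 l1] := grid_mono1 A Hii Hi' Hj.
have [m2 l2] := grid_mono1 A Hii Hi' Hj'.
have [m3 l3] := grid_mono1 A' Hjj Hj' Hi.
have [m4 l4] := grid_mono1 A' Hjj Hj' Hi'.
rewrite /gT in m3 l3 m4 l4.
have [f1 f2 f3 f4] := grid_facts Hg Hi Hj.
have [f5 f6 f7 f8] := grid_facts Hg Hi' Hj'.
have [f9 f10 f11 f12] := grid_facts Hg Hi Hj'.
have [f13 f14 f15 f16] := grid_facts Hg Hi' Hj.
case/or4P=> /orP [] /eqP E; subst; lia.
Qed.

Definition mk N (g : nat -> nat -> nat) : qmap N := [ffun p : Ln N * Ln N => inord (g p.1 p.2)].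

Lemma grid_le N g : gridok N g -> forall i j, i <= N -> j <= N -> g i j <= N.
Proof.
move=> Hg i j Hi Hj; have [A _] := Hg.
have [h _] := grid_mono1 A Hi (leqnn N) Hj.
have [_ _ _ f] := grid_facts Hg Hi Hj; lia.
Qed.

Lemma qv_mk N g : gridok N g -> forall i j : Ln N, qv (mk N g) i j = g i j.
Proof.
move=> Hg i j; rewrite /qv ffunE /= inordK // ltnS; apply: (grid_le Hg);
by rewrite -ltnS ltn_ord.
Qed.

Lemma dqc_mk N g : gridok N g -> is_dqc (mk N g).
Proof.
move=> Hg.
have Hl : forall i : Ln N, i <= N by move=> i; rewrite -ltnS ltn_ord.
split.
- move=> y; exists (y, ord_max); apply: val_inj; rewrite ffunE /= inordK.
    by have [_ _ -> _] := grid_facts Hg (Hl y) (Hl y).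
  by have [_ _ -> _] := grid_facts Hg (Hl y) (Hl y); exact: ltn_ord.
- by move=> i; rewrite !qv_mk //; have [-> -> _ _] := grid_facts Hg (Hl i) (Hl i).
- by move=> i; rewrite !qv_mk //; have [_ _ -> ->] := grid_facts Hg (Hl i) (Hl i).
- move=> i i' j Hii; rewrite !qv_mk //; have [A _] := Hg; have [A' _] := gridok_T Hg.
  have [h1 _] := grid_mono1 A Hii (Hl i') (Hl j).
  have [h2 _] := grid_mono1 A' Hii (Hl i') (Hl j).
  by split.
- move=> i i' j j' Hii Hjj Hb; rewrite !qv_mk //.
  apply: (rect Hg) => //.
Qed.

Lemma qf_x0 m (w : 'S_m.+1) x : qf w x 0 = 0.
Proof. by rewrite /qf big1 // => k _; rewrite ltn0 andbF. Qed.

Lemma qf_xN m (w : 'S_m.+1) x : x <= m.+1 -> qf w x m.+1 = x.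
Proof.
elim: x => [|x IH] Hx; first by rewrite qf0.
by rewrite qfS // IH ?(ltnW Hx) // fw_lt addn1.
Qed.

Lemma gridA_q m (w : 'S_m.+1) : gridA m.+1 (qf w).
Proof.
split=> [i Hi|i j Hi Hj]; first by rewrite qf_x0 qf_xN.
rewrite qfS //; case: (_ < j); lia.
Qed.

Lemma gridok_q m (w : 'S_m.+1) : gridok m.+1 (qf w).
Proof.
split; first exact: gridA_q.
apply: gridA_ext (gridA_q (w^-1)%g) => i j; by rewrite /gT qfT invgK.
Qed.

Lemma Qw_mk m (w : 'S_m.+1) : Qw w = mk m.+1 (qf w).
Proof. by apply/ffunP => p; rewrite !ffunE card_qf. Qed.

Definition bump (g : nat -> nat -> nat) x y :=
  fun i j => if (i == x) && (j == y) then (g i j).+1 else g i j.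

Definition RA (g : nat -> nat -> nat) x y := g x.-1 y = g x y /\ g x.+1 y = (g x y).+1.

Definition raisable N g x y := [/\ 0 < x < N, 0 < y < N, RA g x y & RA (gT g) y x].

Lemma gridA_bump N g x y : gridA N g -> 0 < x < N -> 0 < y < N -> RA g x y ->
  gridA N (bump g x y).
Proof.
move=> [H1 H2] Hx Hy [R1 R2]; split.
  move=> i Hi; rewrite /bump; have [a b] := H1 i Hi.
  have -> : (0 == y) = false by apply/eqP; lia.
  have -> : (N == y) = false by apply/eqP; lia.
  by rewrite !andbF.
move=> i j Hi Hj; rewrite /bump; have := H2 i j Hi Hj.
have [Ex|Ex] := eqVneq i x; have [Ey|Ey] := eqVneq j y;
  have [Ex'|Ex'] := eqVneq i.+1 x; rewrite ?Ex ?Ey ?Ex' ?eqxx /=.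
all: try (rewrite ?(negbTE Ex) ?(negbTE Ey) ?(negbTE Ex') /= ).
all: try lia.
all: by subst x; rewrite /= in R1; lia.
Qed.

Lemma gridok_bump N g x y : gridok N g -> raisable N g x y -> gridok N (bump g x y).
Proof.
move=> [A B] [Hx Hy R1 R2]; split; first exact: gridA_bump.
apply: gridA_ext (gridA_bump B Hy Hx R2) => i j.
by rewrite /gT /bump andbC.
Qed.

Lemma two_raisable m (w : 'S_m.+1) x1 y1 x2 y2 :
  meet_irreducible (Qw w) -> raisable m.+1 (qf w) x1 y1 -> raisable m.+1 (qf w) x2 y2 ->
  x1 = x2 /\ y1 = y2.
Proof.
rewrite Qw_mk => -[Hd _ Hmi] R1 R2.
have [E|NE] := boolP ((x1 == x2) && (y1 == y2)).
  by case/andP: E => /eqP -> /eqP ->.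
exfalso.
have Hg := gridok_q w.
have G1 := gridok_bump Hg R1.
have G2 := gridok_bump Hg R2.
have Hm : is_meet (mk m.+1 (qf w)) (mk m.+1 (bump (qf w) x1 y1)) (mk m.+1 (bump (qf w) x2 y2)).
  split=> //.
  - by move=> i j; rewrite !qv_mk // /bump; case: ifP.
  - by move=> i j; rewrite !qv_mk // /bump; case: ifP.
  move=> u _ h1 h2 i j; have := h1 i j; have := h2 i j; rewrite !qv_mk // /bump.
  case: ifP => [/andP [/eqP e1 /eqP e2]|_]; case: ifP => [/andP [/eqP e3 /eqP e4]|_] //.
  by move: NE; rewrite -e1 -e2 -e3 -e4 !eqxx.
have [E|E] := Hmi _ _ (dqc_mk G1) (dqc_mk G2) Hm.
  have [/andP [_ Hx] /andP [_ Hy] _ _] := R1.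
  have := f_equal (fun Q => qv Q (inord x1) (inord y1)) E => /=.
  rewrite !qv_mk // /bump !inordK ?eqxx /=; try lia.
have [/andP [_ Hx] /andP [_ Hy] _ _] := R2.
have := f_equal (fun Q => qv Q (inord x2) (inord y2)) E => /=.
rewrite !qv_mk // /bump !inordK ?eqxx /=; try lia.
Qed.

Lemma RA_ext g h x y : (forall a b, g a b = h a b) -> RA g x y -> RA h x y.
Proof. by move=> E; rewrite /RA !E. Qed.

Lemma raisable_T m (w : 'S_m.+1) x y :
  raisable m.+1 (qf (w^-1)%g) x y -> raisable m.+1 (qf w) y x.
Proof.
move=> [H1 H2 R1 R2]; split=> //.
  by apply: RA_ext R2 => a b; rewrite /gT qfT invgK.
by apply: RA_ext R1 => a b; rewrite /gT qfT invgK.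
Qed.

Lemma desc_raisable m (w : 'S_m.+1) p : p.+1 < m.+1 -> fw w p.+1 < fw w p ->
  exists y, raisable m.+1 (qf w) p.+1 y.
Proof.
move=> Hp Hd.
set f := fw w; set g := fw (w^-1)%g.
pose P y := [&& f p.+1 < y, y <= f p & p < g y.-1].
have exP : exists y, P y.
  exists (f p.+1).+1; rewrite /P ltnSn Hd /= /g /f fw_inv //.
have ubP : forall y, P y -> y <= f p by move=> y /and3P [].
case: (ex_maxnP exP ubP) => y /and3P [h1 h2 h3] hmax.
have hfp : f p < m.+1 by apply: fw_lt.
have hgy : g y < p.+1.
  have [E|NE] := eqVneq y (f p).
    by rewrite E /g /f fw_inv //; lia.
  rewrite ltnNge; apply/negP => hc.
  have : P y.+1 by rewrite /P /=; apply/and3P; split; lia.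
  by move/hmax; lia.
exists y; split.
- by apply/andP; split.
- by apply/andP; split; lia.
- split.
    rewrite /= qfS; last lia.
    have -> : (fw w p < y) = false by apply/negbTE; rewrite -leqNgt.
    by rewrite addn0.
  by rewrite qfS // /f in h1 *; rewrite h1 addn1.
- rewrite /RA /gT !(qfT w p.+1).
  have Ey : y = y.-1.+1 by lia.
  split.
    rewrite [in RHS]Ey qfS; last lia.
    have -> : (fw (w^-1)%g y.-1 < p.+1) = false by apply/negbTE; rewrite -leqNgt.
    by rewrite addn0.
  rewrite qfS; last lia.
  by rewrite /g in hgy; rewrite hgy addn1.
Qed.

Lemma desc_unique m (w : 'S_m.+1) p1 p2 : meet_irreducible (Qw w) ->
  p1.+1 < m.+1 -> fw w p1.+1 < fw w p1 ->
  p2.+1 < m.+1 -> fw w p2.+1 < fw w p2 -> p1 = p2.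
Proof.
move=> Hi H1 D1 H2 D2.
have [y1 R1] := desc_raisable H1 D1; have [y2 R2] := desc_raisable H2 D2.
by have [[E] _] := two_raisable Hi R1 R2.
Qed.

Lemma desc_unique_inv m (w : 'S_m.+1) p1 p2 : meet_irreducible (Qw w) ->
  p1.+1 < m.+1 -> fw (w^-1)%g p1.+1 < fw (w^-1)%g p1 ->
  p2.+1 < m.+1 -> fw (w^-1)%g p2.+1 < fw (w^-1)%g p2 -> p1 = p2.
Proof.
move=> Hi H1 D1 H2 D2.
have [y1 /raisable_T R1] := desc_raisable H1 D1.
have [y2 /raisable_T R2] := desc_raisable H2 D2.
by have [_ [E]] := two_raisable Hi R1 R2.
Qed.

Lemma up_ge (h : nat -> nat) a b : (forall k, a <= k -> k < b -> h k < h k.+1) ->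
  a <= h a -> forall k, a <= k -> k <= b -> k <= h k.
Proof.
move=> H Ha k Hak; elim: k Hak => [|k IH] Hak Hkb.
  by [].
have [E|NE] := eqVneq a k.+1; first by rewrite -E.
have hk : a <= k by lia.
have := H k hk Hkb; have := IH hk (ltnW Hkb); lia.
Qed.

Lemma up_le (h : nat -> nat) a b : (forall k, a <= k -> k < b -> h k < h k.+1) ->
  h b <= b -> forall k, a <= k -> k <= b -> h k <= k.
Proof.
move=> H Hb k Hak Hkb.
have : forall d, d <= b - a -> h (b - d) <= b - d.
  elim=> [|d IH] Hd; first by rewrite subn0.
  have := H (b - d.+1) ltac:(lia) ltac:(lia).
  have -> : (b - d.+1).+1 = b - d by lia.
  have := IH ltac:(lia); lia.
move/(_ (b - k) ltac:(lia)); have -> : b - (b - k) = k by lia.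
done.
Qed.

Lemma up_lt (h : nat -> nat) a b : (forall k, a <= k -> k < b -> h k < h k.+1) ->
  forall k l, a <= k -> k < l -> l <= b -> h k < h l.
Proof.
move=> H k l Hak; elim: l => [|l IH] // Hkl Hlb.
have [E|NE] := eqVneq k l.
  by rewrite E; apply: H; lia.
have := IH ltac:(lia) ltac:(lia); have := H l ltac:(lia) Hlb; lia.
Qed.

Lemma valQ m (w : 'S_m.+1) (a b : Ln m.+1) : val (Qw w (a, b)) = qf w a b.
Proof. by rewrite Qw_mk; apply: (qv_mk (gridok_q w)). Qed.

Lemma QT m (w : 'S_m.+1) (a b : Ln m.+1) : Qw (w^-1)%g (a, b) = Qw w (b, a).
Proof. by apply: val_inj; rewrite !valQ qfT invgK. Qed.

Lemma assocT m (w : 'S_m.+1) : qassoc (Qw w) -> qassoc (Qw (w^-1)%g).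
Proof. by move=> H i j k; rewrite !(QT w) H. Qed.

Lemma qf_mono1 m (w : 'S_m.+1) i i' j : i <= i' -> i' <= m.+1 -> j <= m.+1 ->
  qf w i j <= qf w i' j /\ qf w i' j <= qf w i j + (i' - i).
Proof. by move=> *; have [A _] := gridok_q w; apply: (grid_mono1 A). Qed.

Lemma qf_mono2 m (w : 'S_m.+1) i j j' : j <= j' -> j' <= m.+1 -> i <= m.+1 ->
  qf w i j <= qf w i j' /\ qf w i j' <= qf w i j + (j' - j).
Proof.
move=> *; rewrite !(qfT w i); exact: (grid_mono1 (gridA_q (w^-1)%g)).
Qed.

Lemma W_nonassoc m (w : 'S_m.+1) j : j < m.+1 ->
  (forall k, j < k -> k < m.+1 -> fw w j < fw w k) ->
  (exists k, k <= j /\ j < fw w k) -> ~ qassoc (Qw w).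
Proof.
move=> Hj Hrl [k [Hkj Hfk]] Ha.
set t := (fw w j).+1.
have Ht : t <= m.+1 by apply: fw_lt.
have Qa : qf w j.+1 t = t.
  rewrite qfT.
  suff : forall y, y <= t -> qf (w^-1)%g y j.+1 = y by apply.
  elim=> [|y IH] Hy; first by rewrite qf0.
  rewrite qfS; last lia.
  rewrite IH; last lia.
  case: (ltnP (fw (w^-1)%g y) j.+1) => [_|hc]; first by rewrite addn1.
  exfalso.
  have hgy : fw (w^-1)%g y < m.+1 by apply: fw_lt.
  have := Hrl _ hc hgy; rewrite fw_invV; lia.
have Qb : qf w j.+1 j.+1 <= j.
  have [_ l1] := @qf_mono1 m w k.+1 j.+1 j.+1 ltac:(lia) ltac:(lia) ltac:(lia).
  rewrite (@qfS m w k) in l1; last lia.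
  have E0 : (fw w k < j.+1) = false by apply/negbTE; rewrite -leqNgt.
  rewrite E0 in l1.
  have [l2 _] := @qf_mono2 m w k j.+1 m.+1 ltac:(lia) ltac:(lia) ltac:(lia).
  rewrite qf_xN in l2; lia.
have Qc : qf w j.+1 t = qf w j t + 1.
  by rewrite qfS // /t ltnSn.
have := f_equal val (Ha (inord j.+1) (inord j.+1) (inord t)).
rewrite !valQ !inordK ?Qa //.
move=> E.
have [l3 _] := @qf_mono1 m w (qf w j.+1 j.+1) j t Qb ltac:(lia) Ht.
lia.
Qed.

Lemma fw_tperm m (a b : 'I_m.+1) x : b = a.+1 :> nat -> x < m.+1 ->
  fw (tperm a b) x = if (x == a :> nat) then a.+1 else if x == a.+1 then (a : nat) else x.
Proof.
move=> Hb Hx; rewrite /fw; case: tpermP => [E|E|nx ny].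
- have := f_equal val E; rewrite /= inordK // => ->; rewrite eqxx //.
- have := f_equal val E; rewrite /= inordK // => ->; rewrite Hb eqxx.
  by have -> : (a.+1 == a) = false by apply/eqP; lia.
- rewrite /= inordK //.
  have -> : (x == a :> nat) = false by apply/eqP => e; apply: nx; apply: val_inj; rewrite /= inordK.
  have -> : (x == a.+1) = false.
    by apply/eqP => e; apply: ny; apply: val_inj; rewrite /= inordK // Hb.
  by [].
Qed.

Definition F (a x y : nat) := if (x == a.+1) && (y == a.+1) then a else minn x y.

Lemma qf_tperm m (a b : 'I_m.+1) x y : b = a.+1 :> nat -> x <= m.+1 ->
  qf (tperm a b) x y = F a x y.
Proof.
move=> Hb; elim: x => [|x IH] Hx.
  rewrite qf0 /F; have -> : (0 == a.+1) = false by []; by rewrite /= min0n.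
rewrite qfS // IH ?(ltnW Hx) // fw_tperm // /F.
do ! case: eqP => ? /=; lia.
Qed.

Lemma F_assoc a i j k : F a i (F a j k) = F a (F a i j) k.
Proof. rewrite /F; do ! case: ifP; lia. Qed.

Lemma fwd m (w : 'S_m.+1) : is_simple_transposition w -> qassoc (Qw w).
Proof.
move=> [a [Ha ->]] i j k; apply: val_inj.
have Hb : (Ordinal Ha : nat) = a.+1 by [].
have hij : qf (tperm a (Ordinal Ha)) i j <= m.+1 by rewrite -valQ -ltnS ltn_ord.
have hi : (i : nat) <= m.+1 by rewrite -ltnS ltn_ord.
have hj : (j : nat) <= m.+1 by rewrite -ltnS ltn_ord.
rewrite !valQ (qf_tperm _ Hb hij) (qf_tperm _ Hb hi) (qf_tperm _ Hb hj).
by rewrite (qf_tperm _ Hb hi) F_assoc.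
Qed.

Lemma qf1 m x y : x <= m.+1 -> qf (1%g : 'S_m.+1) x y = minn x y.
Proof.
elim: x => [|x IH] Hx; first by rewrite qf0 min0n.
rewrite qfS // IH ?(ltnW Hx) // /fw perm1 inordK //.
case: (ltnP x y) => h; lia.
Qed.

Lemma max_one m : is_dqc (Qw (1%g : 'S_m.+1)) -> is_maximum (Qw (1%g : 'S_m.+1)).
Proof.
move=> Hd; split=> // u [_ _ H3 H4 _] i j.
rewrite /qv valQ qf1; last by rewrite -ltnS ltn_ord.
have [_ h1] := H4 j ord_max i (leq_ord j).
have [h2 _] := H4 i ord_max j (leq_ord i).
have [e1 e2] := H3 i; have [e3 e4] := H3 j.
rewrite /qv in h1 h2 e1 e2 e3 e4.
rewrite leq_min; apply/andP; split; lia.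
Qed.

Lemma noDesc_id m (w : 'S_m.+1) : (forall p, p < m -> fw w p < fw w p.+1) -> w = 1%g.
Proof.
move=> H.
have H' : forall k, 0 <= k -> k < m -> fw w k < fw w k.+1 by move=> k _; apply: H.
have ge := up_ge H' (leq0n _).
have le := up_le H' (b := m) ltac:(have := fw_lt w m; lia).
apply/permP => i; apply: val_inj; rewrite /= perm1 -fwE.
have hi : (i : nat) <= m by rewrite -ltnS ltn_ord.
have := ge i (leq0n _) hi; have := le i (leq0n _) hi; lia.
Qed.

Lemma exists_desc m (w : 'S_m.+1) : w <> 1%g -> exists p, p.+1 < m.+1 /\ fw w p.+1 < fw w p.
Proof.
move=> Hw.
have [/existsP [p Hp]|H] := boolP [exists p : 'I_m, fw w p.+1 < fw w p].
  by exists p; split => //; rewrite ltnS ltn_ord.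
exfalso; apply: Hw; apply: noDesc_id => p Hp.
move: H; rewrite negb_exists => /forallP /(_ (Ordinal Hp)) /=.
rewrite -leqNgt leq_eqVlt => /orP [/eqP E|//].
have := @fw_inj m w p p.+1 ltac:(lia) ltac:(lia) E; lia.
Qed.

Lemma pigeon (h : nat -> nat) n' : (forall k l, k <= n' -> l <= n' -> h k = h l -> k = l) ->
  (forall k, k <= n' -> h k < n') -> False.
Proof.
move=> Hi Hb.
have U : uniq [seq h k | k <- iota 0 n'.+1].
  rewrite map_inj_in_uniq ?iota_uniq // => k l; rewrite !mem_iota /= !add0n !ltnS.
  exact: Hi.
have S : {subset [seq h k | k <- iota 0 n'.+1] <= iota 0 n'}.
  move=> v /mapP [k]; rewrite mem_iota add0n ltnS /= => hk ->.
  by rewrite mem_iota add0n /= Hb.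
have := uniq_leq_size U S; rewrite size_map !size_iota; lia.
Qed.

Lemma lt_of_not_desc m (w : 'S_m.+1) k : k.+1 < m.+1 -> ~~ (fw w k.+1 < fw w k) ->
  fw w k < fw w k.+1.
Proof.
move=> Hk; rewrite -leqNgt leq_eqVlt => /orP [/eqP E|//].
have := @fw_inj m w k k.+1 ltac:(lia) ltac:(lia) E; lia.
Qed.

Lemma up_except m (w : 'S_m.+1) p : meet_irreducible (Qw w) ->
  p.+1 < m.+1 -> fw w p.+1 < fw w p ->
  forall k, k.+1 < m.+1 -> k <> p -> fw w k < fw w k.+1.
Proof.
move=> Hi Hp Hd k Hk Hkp; apply: lt_of_not_desc => //; apply/negP => D.
by apply: Hkp; apply: (desc_unique Hi Hk D Hp Hd).
Qed.

Lemma up_except_inv m (w : 'S_m.+1) p : meet_irreducible (Qw w) ->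
  p.+1 < m.+1 -> fw (w^-1)%g p.+1 < fw (w^-1)%g p ->
  forall k, k.+1 < m.+1 -> k <> p -> fw (w^-1)%g k < fw (w^-1)%g k.+1.
Proof.
move=> Hi Hp Hd k Hk Hkp; apply: lt_of_not_desc => //; apply/negP => D.
by apply: Hkp; apply: (desc_unique_inv Hi Hk D Hp Hd).
Qed.

Lemma bwd m (w : 'S_m.+1) : meet_irreducible (Qw w) -> qassoc (Qw w) ->
  is_simple_transposition w.
Proof.
move=> Hi Ha.
have Hw1 : w <> 1%g.
  move=> E; case: Hi => Hd Hnm _; apply: Hnm; rewrite E; apply: max_one; by rewrite -E.
have Hw1' : (w^-1)%g <> 1%g by move=> E; apply: Hw1; rewrite -(invgK w) E invg1.
have [p [Hp Dp]] := exists_desc Hw1.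
have [c [Hc Dc]] := exists_desc Hw1'.
set f := fw w in Dp *; set g := fw (w^-1)%g in Dc *.
have Uf := up_except Hi Hp Dp; have Ug := up_except_inv Hi Hc Dc.
rewrite -/f in Uf; rewrite -/g in Ug.
have fg : forall k, k < m.+1 -> g (f k) = k by move=> k; apply: fw_inv.
have gf : forall k, k < m.+1 -> f (g k) = k by move=> k; apply: fw_invV.
have finj : forall k l, k < m.+1 -> l < m.+1 -> f k = f l -> k = l by move=> k l; apply: fw_inj.
have flt : forall k, f k < m.+1 by move=> k; apply: fw_lt.
have glt : forall k, g k < m.+1 by move=> k; apply: fw_lt.
have I1f : forall k, k <= p -> k <= f k.
  move=> k hk; apply: (@up_ge f 0 p) => //; move=> l _ hl; apply: Uf; lia.
have I2f : forall k, p.+1 <= k -> k <= m -> f k <= k.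
  move=> k h1 h2; apply: (@up_le f p.+1 m) => //; last by have := flt m; lia.
  move=> l h3 h4; apply: Uf; lia.
have I3f : forall k, p.+1 < k -> k <= m -> f p.+1 < f k.
  move=> k h1 h2; apply: (@up_lt f p.+1 m) => //; move=> l h3 h4; apply: Uf; lia.
have I4f : forall k, k < p -> f k < f p.
  move=> k h1; apply: (@up_lt f 0 p) => //; move=> l h3 h4; apply: Uf; lia.
have I1g : forall k, k <= c -> k <= g k.
  move=> k hk; apply: (@up_ge g 0 c) => //; move=> l _ hl; apply: Ug; lia.
have I2g : forall k, c.+1 <= k -> k <= m -> g k <= k.
  move=> k h1 h2; apply: (@up_le g c.+1 m) => //; last by have := glt m; lia.
  move=> l h3 h4; apply: Ug; lia.
have I3g : forall k, c.+1 < k -> k <= m -> g c.+1 < g k.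
  move=> k h1 h2; apply: (@up_lt g c.+1 m) => //; move=> l h3 h4; apply: Ug; lia.
have noWf : forall k, k <= p.+1 -> f k <= p.+1.
  move=> k hk; rewrite leqNgt; apply/negP => hc.
  apply: (W_nonassoc (j := p.+1) Hp _ _ Ha).
    move=> l h1 h2; apply: I3f; lia.
  by exists k.
have noWg : forall k, k <= c.+1 -> g k <= c.+1.
  move=> k hk; rewrite leqNgt; apply/negP => hc.
  apply: (W_nonassoc (j := c.+1) Hc _ _ (assocT Ha)).
    move=> l h1 h2; apply: I3g; lia.
  by exists k.
have Hfp1 : p <= f p by apply: I1f.
have Hfp2 : f p <= p.+1 by apply: noWf; lia.
have Hfpe : f p = p.+1.
  case: (eqVneq (f p) p.+1) => // Hne; exfalso.
  apply: (@pigeon f p.+1).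
    move=> k l hk hl; apply: finj; lia.
  move=> k hk.
  have [E|NE] := eqVneq k p.+1; first by rewrite E; lia.
  have [E2|NE2] := eqVneq k p; first by rewrite E2; lia.
  have := I4f k ltac:(lia); lia.
have gp1 : g p.+1 = p by rewrite -Hfpe fg //; lia.
have cp1 : c <= p.
  rewrite leqNgt; apply/negP => h; have := I1g p.+1 ltac:(lia); lia.
set t := f p.+1.
have tp : t <= p by rewrite /t; lia.
have gt : g t = p.+1 by rewrite /t fg.
have tc : t <= c.
  rewrite leqNgt; apply/negP => h; have := I2g t ltac:(lia) ltac:(lia); lia.
have pc : p <= c by have := noWg t ltac:(lia); lia.
have Ecp : c = p by lia.
have gp : g p = p.+1.
  have := noWg p ltac:(lia); rewrite -Ecp in gp1 *; lia.
have ft : f p.+1 = p by rewrite -gp gf //; lia.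
have Hpn : p < m.+1 by lia.
exists (Ordinal Hpn), Hp.
apply/permP => i; apply: val_inj; rewrite /= -fwE -/f.
case: tpermP => [->|->|n1 n2] /=; first by [].
  by [].
have hi1 : (i : nat) <> p by move=> e; apply: n1; apply: val_inj.
have hi2 : (i : nat) <> p.+1 by move=> e; apply: n2; apply: val_inj.
have hi : (i : nat) < m.+1 by apply: ltn_ord.
case: (ltnP i p) => hip.
  have h1 := I4f i hip.
  have h2 : f i <> p by rewrite -ft => e; apply: hi2; apply: finj => //; lia.
  have h3 := I1g (f i) ltac:(lia).
  rewrite fg // in h3; have := I1f i ltac:(lia); lia.
have h1 := I3f i ltac:(lia) ltac:(lia).
have h2 : f i <> p.+1 by rewrite -Hfpe => e; apply: hi1; apply: finj => //; lia.
have h3 := I2g (f i) ltac:(lia) ltac:(have := flt i; lia).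
rewrite fg // in h3; have := I2f i ltac:(lia) ltac:(lia); lia.
Qed.

Unset Implicit Arguments.
Theorem mainTheorem8 (n : nat) (Hn : 2 <= n) (Q : qmap n) (w : 'S_n) :
  meet_irreducible Q -> Q = Qw w ->
  (qassoc Q <-> is_simple_transposition w).
Proof.
case: n Hn Q w => [//|m] _ Q w Hi EQ; subst Q.
split; [exact: bwd | exact: fwd].
Qed.
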